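(* Let $K\subseteq[0,1]^n$ and let $f_1,\dots,f_k:K\to[0,1]$ be polynomially bounded on $K$. Then their sum $f:=f_1+\dots+f_k$ is polynomially bounded on $K$.
   Context: For a partition $[n]=A\sqcup S\sqcup B$, the open face is $F_{A,S,B}=\{p\in[0,1]^n: p_i=0\ (i\in A),\ 0<p_i<1\ (i\in S),\ p_i=1\ (i\in B)\}$. For $T\subseteq[n]$, $p^T=\prod_{i\in T}p_i$, $(1-p)^T=\prod_{i\in T}(1-p_i)$. A nonnegative function $h$ on $K$ is polynomially bounded on $K$ if there exist an integer $m\ge0$ and a real $c>0$ such that for every open face $F_{A,S,B}$: if some $q\in K\cap F_{A,S,B}$ has $h(q)>0$, then $h(p)\ge c\left((1-p)^A p^S(1-p)^S p^B\right)^m$ for all $p\in K$. *)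

(* Defs.v *)
From mathcomp Require Import all_boot all_order all_algebra.
Set Implicit Arguments. Unset Strict Implicit. Unset Printing Implicit Defensive.
Import Order.TTheory GRing.Theory Num.Theory.
Local Open Scope ring_scope.

Definition in_cube (R : realFieldType) (n : nat) (p : 'I_n -> R) : Prop :=
  forall i, 0 <= p i <= 1.

Definition is_partition3 (n : nat) (A S B : {set 'I_n}) : Prop :=
  [disjoint A & S] /\ [disjoint A & B] /\ [disjoint S & B] /\
  A :|: S :|: B = [set: 'I_n].

Definition in_face (R : realFieldType) (n : nat) (A S B : {set 'I_n})
  (p : 'I_n -> R) : Prop :=
  (forall i, i \in A -> p i = 0) /\
  (forall i, i \in S -> 0 < p i < 1) /\
  (forall i, i \in B -> p i = 1).

Definition face_monomial (R : realFieldType) (n : nat) (A S B : {set 'I_n})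
  (p : 'I_n -> R) : R :=
  (\prod_(i in A) (1 - p i)) * (\prod_(i in S) p i) *
  (\prod_(i in S) (1 - p i)) * (\prod_(i in B) p i).

Definition poly_bounded (R : realFieldType) (n : nat) (K : ('I_n -> R) -> Prop)
  (h : ('I_n -> R) -> R) : Prop :=
  exists (m : nat) (c : R), 0 < c /\
    forall A S B : {set 'I_n}, is_partition3 A S B ->
      (exists q, K q /\ in_face A S B q /\ 0 < h q) ->
      forall p, K p -> c * (face_monomial A S B p) ^+ m <= h p.

(* Main.v *)
Require Import Defs.
From mathcomp Require Import all_boot all_order all_algebra.
Import Order.TTheory GRing.Theory Num.Theory.
Local Open Scope ring_scope.

Lemma fm01 (R : realFieldType) (n : nat) (A S B : {set 'I_n}) (p : 'I_n -> R) :
  in_cube p -> 0 <= face_monomial A S B p <= 1.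
Proof.
move=> hp.
have h1 : forall i, 0 <= p i <= 1 by [].
have h2 : forall i, 0 <= 1 - p i <= 1.
  move=> i; have /andP[a b] := h1 i; apply/andP; split; rewrite ?subr_ge0 //.
  by rewrite lerBlDr lerDl.
have P1 : forall (F : 'I_n -> R) (X : {set 'I_n}), (forall i, 0 <= F i <= 1) ->
   0 <= \prod_(i in X) F i <= 1.
  move=> F X hF; apply/andP; split.
    by apply: prodr_ge0 => i _; have /andP[] := hF i.
  by apply: prodr_ile1 => i _; apply: hF.
have Mu : forall x y : R, 0 <= x <= 1 -> 0 <= y <= 1 -> 0 <= x * y <= 1.
  move=> x y /andP[x0 x1] /andP[y0 y1]; apply/andP; split; first exact: mulr_ge0.
  by apply: mulr_ile1.
rewrite /face_monomial; apply: (Mu); last exact: (P1).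
  apply: (Mu); last exact: (P1).
  by apply: (Mu); exact: (P1).
Qed.

Theorem lemma11 (R : realFieldType) (n k : nat) (K : ('I_n -> R) -> Prop)
  (f : 'I_k -> ('I_n -> R) -> R) :
  (forall p, K p -> in_cube p) ->
  (forall j p, K p -> 0 <= f j p <= 1) ->
  (forall j, poly_bounded K (f j)) ->
  poly_bounded K (fun p => \sum_(j < k) f j p).
Proof.
move=> Kc f01 pb.
have : forall j, exists mc : nat * R, 0 < mc.2 /\
    forall A S B : {set 'I_n}, is_partition3 A S B ->
      (exists q, K q /\ in_face A S B q /\ 0 < f j q) ->
      forall p, K p -> mc.2 * (face_monomial A S B p) ^+ mc.1 <= f j p.
  move=> j; have [m [c [c0 H]]] := pb j; by exists (m, c).
case/fin_all_exists => mc Hmc.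
exists (\max_j (mc j).1), (\prod_j Num.min (mc j).2 1); split.
  by apply: prodr_gt0 => j _; rewrite lt_min ltr01 andbT; case: (Hmc j).
move=> A S B hP [q [Kq [Fq sq]]] p Kp.
have [j fj] : exists j, 0 < f j q.
  case: (boolP [exists j, 0 < f j q]) => [/existsP//|/existsPn hn].
  exfalso; move: sq; apply/negP; rewrite -leNgt; apply: sumr_le0 => j _.
  by rewrite leNgt hn.
have [c0 Hj] := Hmc j.
have Mp := @fm01 _ _ A S B p (Kc p Kp); case/andP: Mp => M0 M1.
apply: (le_trans _ (_ : f j p <= _)); last first.
  rewrite (bigD1 j) //= lerDl; apply: sumr_ge0 => i _; by case/andP: (f01 i p Kp).
apply: le_trans (Hj A S B hP (ex_intro _ q (conj Kq (conj Fq fj))) p Kp).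
have e1 : face_monomial A S B p ^+ (\max_j0 (mc j0).1) <= face_monomial A S B p ^+ (mc j).1.
  by apply: ler_wiXn2l => //; apply: (leq_bigmax j).
have c1 : \prod_j0 Num.min (mc j0).2 1 <= (mc j).2.
  have m0 : 0 < Num.min (mc j).2 1 by rewrite lt_min ltr01 andbT.
  rewrite (bigD1 j) //=; apply: (@le_trans _ _ (Num.min (mc j).2 1)); last by rewrite ge_min lexx.
  rewrite ger_pMr //; apply: prodr_ile1 => i _; rewrite ge_min lexx orbT andbT.
  by rewrite le_min ler01 andbT; have [/ltW] := Hmc i.
apply: ler_pM => //; [|exact: exprn_ge0].
by apply: prodr_ge0 => i _; rewrite le_min ler01 andbT; have [/ltW] := Hmc i.
Qed.
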